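(* Let $p$ be a prime, $m\ge 1$ and $r$ integers with $r^p\equiv 1 \pmod m$, and let $G=\langle x, y\mid x^p=y^m=1,\ x^{-1}yx=y^r\rangle$ (so $G\cong C_p\ltimes C_m$ and $|G|=pm$). Assume that $p$ is the smallest prime divisor of $|G|$ and that $\gcd(p(r-1), m)=1$. Then $\mathsf d(G)=m+p-2$.
   Context: A sequence over a finite multiplicatively written group $G$ is a finite unordered list of elements of $G$ with repetition allowed; its length is the number of terms. For a sequence $S=g_1\cdot\ldots\cdot g_\ell$, $\pi(S)=\{g_{\tau(1)}\cdots g_{\tau(\ell)}:\tau \text{ a permutation of } [1,\ell]\}$. $S$ is product-one if $1\in\pi(S)$. The small Davenport constant $\mathsf d(G)$ is the maximal integer $\ell$ such that there is a sequence of length $\ell$ over $G$ having no nonempty product-one subsequence. *)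

(* Defs.v *)
From mathcomp Require Import all_boot all_order all_algebra all_fingroup.
Set Implicit Arguments. Unset Strict Implicit. Unset Printing Implicit Defensive.
Import GRing.Theory.

Local Open Scope group_scope.

Definition expgz (gT : finGroupType) (y : gT) (r : int) : gT :=
  match r with
  | Posz n => y ^+ n
  | Negz n => (y ^+ n.+1)^-1
  end.

(* Sequences over G are modelled by lists (seq gT) whose terms lie in G;
   all notions below are invariant under permutation, so this models
   unordered sequences (finite multisets). *)

Definition product_one (gT : finGroupType) (S : seq gT) : Prop :=
  exists s' : seq gT, perm_eq s' S /\ \prod_(g <- s') g = 1.

Definition product_one_free (gT : finGroupType) (G : {set gT}) (S : seq gT) : Prop :=
  all (fun g => g \in G) S /\
  forall T : seq gT, subseq T S -> T <> [::] -> ~ product_one T.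

Definition is_small_davenport (gT : finGroupType) (G : {set gT}) (n : nat) : Prop :=
  (exists S : seq gT, product_one_free G S /\ size S = n) /\
  (forall S : seq gT, product_one_free G S -> (size S <= n)%N).

(* Main.v *)
Require Import Defs.
From Stdlib Require Import ClassicalEpsilon.
From mathcomp Require Import all_boot all_order all_algebra all_fingroup.
Set Implicit Arguments. Unset Strict Implicit. Unset Printing Implicit Defensive.

Definition asb (P : Prop) : bool :=
  if excluded_middle_informative P then true else false.
Lemma asbP (P : Prop) : reflect P (asb P).
Proof. by rewrite /asb; case: excluded_middle_informative => h; constructor. Qed.

Section Multiset.
Variable T : eqType.
Definition subm (A S : seq T) := forall x, (count_mem x A <= count_mem x S)%N.
Lemma subm_trans A B C : subm A B -> subm B C -> subm A C.
Proof. by move=> h1 h2 x; apply: leq_trans (h1 x) (h2 x). Qed.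
Lemma subm_nil S : subm [::] S. Proof. by move=> x. Qed.
Lemma subm_perml A A' S : perm_eq A A' -> subm A S -> subm A' S.
Proof. by move=> pA h x; rewrite -(seq.permP pA (pred1 x)); apply: h. Qed.
Lemma subm_decomp W S : subm W S -> exists S', perm_eq S (W ++ S').
Proof.
move=> /count_subseqP [s sub pW]; have [s3 ps] := perm_to_subseq sub.
by exists s3; rewrite (perm_trans ps) // perm_cat2r perm_sym.
Qed.
Lemma subm_catl T1 W S S' : perm_eq S (W ++ S') -> subm T1 S' -> subm (T1 ++ W) S.
Proof.
move=> pS h x; rewrite (seq.permP pS) !count_cat addnC leq_add2l; exact: h.
Qed.
Lemma subm_rest W S S' : perm_eq S (W ++ S') -> subm S' S.
Proof. by move=> pS x; rewrite (seq.permP pS) count_cat leq_addl. Qed.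
Lemma subm_infix a b c : subm b (a ++ b ++ c).
Proof.
move=> x; rewrite !count_cat.
exact: leq_trans (leq_addr _ _) (leq_addl _ _).
Qed.
Lemma subm_mem A S x : subm A S -> x \in A -> x \in S.
Proof. by move=> h; rewrite -!has_pred1 !has_count => /leq_trans; apply. Qed.
Lemma subm_subseq A S : subm A S -> exists2 s, subseq s S & perm_eq A s.
Proof. by move/count_subseqP. Qed.
End Multiset.
From mathcomp Require Import zify.
Lemma arith1 (a b x1 x2 x3 p : nat) : (b + 2 <= x1 + p)%N -> (x3 <= x2)%N ->
  (x1 + a.+1 <= x3 + 1)%N -> (a + b + 2 <= x2 + p)%N.
Proof. lia. Qed.
Lemma arith2 (a k p : nat) : (0 < k)%N -> (a < p)%N -> (a + 2 <= k + p)%N.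
Proof. lia. Qed.

Section Scherk.
Local Open Scope group_scope.
Variables (gT : finGroupType) (H : {group gT}).
Hypothesis abH : abelian H.

Lemma scherk_aux n (A B : {set gT}) : (#|B| <= n)%N -> A \subset H -> B \subset H ->
  1 \in A -> 1 \in B ->
  (forall a b, a \in A -> b \in B -> a * b = 1 -> b = 1) ->
  (#|A| + #|B| <= #|(A * B)%g| + 1)%N.
Proof.
elim: n A B => [|n IH] A B leB sAH sBH A1 B1 uq.
  by move: leB; rewrite leqn0 => /eqP/card0_eq/(_ 1); rewrite B1.
have comm : {in H &, forall x y, commute x y} by move=> x y Hx Hy; exact: (centsP abH).
case: (boolP [forall a in A, forall b in B, a * b \in A]) => [cl|].
  have B1s : B \subset [set 1].
    apply/subsetP => b Bb; rewrite inE; apply/eqP.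
    have sub : A :* b \subset A.
      apply/subsetP => z; rewrite mem_rcoset => Az.
      have := forallP cl (z * b^-1); rewrite Az /= => /forallP /(_ b).
      by rewrite Bb /= mulgKV.
    have eqA : A :* b = A by apply/eqP; rewrite eqEcard sub card_rcoset leqnn.
    have : 1 \in A :* b by rewrite eqA.
    rewrite mem_rcoset mul1g => Abi.
    by apply: (uq b^-1 b Abi Bb); rewrite mulVg.
  have -> : B = [set 1].
    by apply/eqP; rewrite eqEsubset B1s sub1set B1.
  by rewrite rcoset1 cards1.
rewrite negb_forall_in => /existsP [a /andP [Aa]].
rewrite negb_forall_in => /existsP [b /andP [Bb abA]].
set A' := A :|: a *: B.
set B' := [set b' in B | a * b' \in A].
have aH : a \in H by apply: (subsetP sAH).
have sB'B : B' \subset B by apply/subsetP => z; rewrite inE => /andP [].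
have leB' : (#|B'| <= n)%N.
  have : B' \subset B :\ b.
    apply/subsetP => z; rewrite !inE => /andP [Bz aZ]; rewrite Bz andbT.
    by apply: contraNneq abA => <-.
  move/subset_leq_card => h; have := cardsD1 b B; rewrite Bb /= => eB.
  by move: leB; rewrite eB add1n ltnS; apply: leq_trans.
have sA'H : A' \subset H.
  rewrite subUset sAH /=; apply/subsetP => z; rewrite mem_lcoset => Bz.
  by rewrite -(mulKVg a z) groupM // (subsetP sBH).
have sB'H : B' \subset H by apply: subset_trans sB'B sBH.
have A'1 : 1 \in A' by rewrite inE A1.
have B'1 : 1 \in B' by rewrite inE B1 mulg1 Aa.
have uq' : forall a0 b0, a0 \in A' -> b0 \in B' -> a0 * b0 = 1 -> b0 = 1.
  move=> a0 b0; rewrite in_setU => /orP [Aa0|Aa0]; rewrite inE => /andP [Bb0 ab0A] e.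
    exact: uq Aa0 Bb0 e.
  move: Aa0; rewrite mem_lcoset => Bc.
  have Hb0 : b0 \in H by apply: (subsetP sBH).
  have Hc : a^-1 * a0 \in H by apply: (subsetP sBH).
  have a0E : a0 = a * (a^-1 * a0) by rewrite mulKVg.
  move: Bc Hc a0E; set c := a^-1 * a0 => Bc Hc a0E.
  have e2 : (a * b0) * c = 1 by rewrite -mulgA (comm _ _ Hb0 Hc) mulgA -a0E.
  have c1 := uq _ _ ab0A Bc e2.
  by move: e2; rewrite c1 mulg1; apply: uq.
have IH' := IH A' B' leB' sA'H sB'H A'1 B'1 uq'.
have sub : A' * B' \subset A * B.
  apply/subsetP => z /mulsgP [x y Ax By ->].
  move: By; rewrite inE => /andP [By ayA].
  move: Ax; rewrite in_setU => /orP [Ax|]; first by rewrite mem_mulg.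
  rewrite mem_lcoset => Bx.
  have Hx : a^-1 * x \in H by apply: (subsetP sBH).
  have Hy : y \in H by apply: (subsetP sBH).
  have -> : x * y = (a * y) * (a^-1 * x).
    by rewrite -mulgA -(comm _ _ Hx Hy) mulgA mulKVg.
  by rewrite mem_mulg.
have cA' : (#|A'| + #|A :&: a *: B| = #|A| + #|B|)%N.
  by rewrite cardsUI card_lcoset.
have cB' : #|B'| = #|A :&: a *: B|.
  rewrite -(card_lcoset B' a); apply: eq_card => z.
  by rewrite mem_lcoset !inE mem_lcoset mulKVg andbC.
rewrite -cA' -cB'; apply: (leq_trans IH').
by rewrite leq_add2r subset_leq_card.
Qed.

Lemma scherk (A B : {set gT}) : A \subset H -> B \subset H ->
  1 \in A -> 1 \in B ->
  (forall a b, a \in A -> b \in B -> a * b = 1 -> b = 1) ->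
  (#|A| + #|B| <= #|(A * B)%g| + 1)%N.
Proof. exact: (@scherk_aux #|B|). Qed.
End Scherk.

Section Key.
Local Open Scope group_scope.
Variables (gT : finGroupType) (G N : {group gT}) (p : nat).
Hypotheses (sNG : N \subset G) (nNG : G \subset 'N(N)) (abN : abelian N)
  (iGN : #|G : N| = p)
  (frob : forall v c, v \in N -> v != 1 -> c \in G -> c \notin N -> c * v != v * c).

Definition freeS (S : seq gT) :=
  forall T, subm T S -> T != [::] -> \prod_(g <- T) g != 1.
Definition Xs (S : seq gT) : {set gT} :=
  [set g in N | asb (exists T, subm T S /\ \prod_(x <- T) x = g)].

Lemma prod_in_G (T : seq gT) : all (fun g => g \in G) T -> \prod_(x <- T) x \in G.
Proof. by move=> /allP h; rewrite big_seq; apply: group_prod => x; apply: h. Qed.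

Lemma all_subm (T S : seq gT) : subm T S -> all (fun g => g \in G) S ->
  all (fun g => g \in G) T.
Proof. by move=> h /allP aS; apply/allP => x xT; apply: aS; apply: subm_mem h xT. Qed.

Lemma one_Xs S : 1 \in Xs S.
Proof.
rewrite inE group1 /=; apply/asbP; exists [::]; split; first exact: subm_nil.
by rewrite big_nil.
Qed.

Lemma Xs_sub S : Xs S \subset N.
Proof. by apply/subsetP => x; rewrite inE => /andP []. Qed.

Lemma subm_take i (S : seq gT) : subm (take i S) S.
Proof. by rewrite -{2}(cat_take_drop i S); apply: (subm_infix [::]). Qed.

Lemma base S : all (fun g => g \in G) S ->
  (forall W, subm W S -> W != [::] -> \prod_(x <- W) x \notin N) -> (size S < p)%N.
Proof.
move=> aS hW; rewrite ltnNge; apply/negP => leS.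
pose P i := \prod_(x <- take i S) x.
have PG i : P i \in G by apply: prod_in_G; apply: all_subm aS; apply: subm_take.
pose f (i : 'I_p.+1) := P i *: N.
have ninj : ~ injective f.
  move=> inj.
  have : (#|[set f i | i : 'I_p.+1]| <= #|lcosets N G|)%N.
    apply: subset_leq_card; apply/subsetP => z /imsetP [i _ ->].
    by rewrite mem_lcosets -(mulg1 (P i)) mem_mulg.
  by rewrite card_imset // card_ord card_lcosets iGN ltnn.
have [i [j [lt_ij eq_f]]] : exists i j : 'I_p.+1, (i < j)%N /\ f i = f j.
  case: (asbP (exists i j : 'I_p.+1, (i < j)%N /\ f i = f j)) => // h.
  exfalso; apply: ninj => i j e; apply/val_inj/eqP.
  case: (ltngtP i j) => // lt; exfalso; apply: h.
    by exists i, j.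
  by exists j, i.
have jS : (j <= size S)%N by apply: leq_trans leS; rewrite -ltnS.
set W := take (j - i) (drop i S).
have PjE : P j = P i * \prod_(x <- W) x.
  by rewrite /P -{1}(subnKC (ltnW lt_ij)) takeD big_cat.
have : (P i)^-1 * P j \in N.
  by rewrite -mem_lcoset -/(f i) eq_f /f lcoset_refl.
rewrite PjE mulKg; apply/negP; apply: hW.
  apply: (@subm_trans _ _ (drop i S)); first exact: subm_take.
  have e : S = take i S ++ drop i S ++ [::] by rewrite cats0 cat_take_drop.
  by rewrite {2}e; apply: subm_infix.
rewrite -size_eq0 size_take_min size_drop -lt0n.
by rewrite leq_min !subn_gt0 lt_ij (leq_trans lt_ij jS).
Qed.

Lemma rot_prod (W : seq gT) i :
  \prod_(x <- rot i W) x = (\prod_(x <- W) x) ^ (\prod_(x <- take i W) x).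
Proof.
have e : \prod_(x <- W) x =
    \prod_(x <- take i W) x * \prod_(x <- drop i W) x.
  by rewrite -big_cat cat_take_drop.
by rewrite /rot big_cat e /conjg -mulgA mulKg.
Qed.

Lemma subm_block (W : seq gT) i k : subm (take k (drop i W)) W.
Proof.
apply: (@subm_trans _ _ (drop i W)); first exact: subm_take.
have e : W = take i W ++ drop i W ++ [::] by rewrite cats0 cat_take_drop.
by rewrite {2}e; apply: subm_infix.
Qed.

Lemma take_block (W : seq gT) i j : (i <= j)%N ->
  \prod_(x <- take j W) x =
  \prod_(x <- take i W) x * \prod_(x <- take (j - i) (drop i W)) x.
Proof. by move=> le; rewrite -{1}(subnKC le) takeD big_cat. Qed.

Lemma main_case S :
  (forall S', (size S' < size S)%N -> all (fun g => g \in G) S' -> freeS S' ->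
     (size S' + 2 <= #|Xs S'| + p)%N) ->
  all (fun g => g \in G) S -> freeS S -> (size S + 2 <= #|Xs S| + p)%N.
Proof.
move=> IH aS fS.
case: (asbP (exists W, subm W S /\ W != [::] /\ \prod_(x <- W) x \in N)) => [exW|noW].
  pose Q k := asb (exists W, subm W S /\ W != [::] /\ \prod_(x <- W) x \in N /\ size W = k).
  have exQ : exists k, Q k.
    by case: exW => W0 [h1 [h2 h3]]; exists (size W0); apply/asbP; exists W0.
  case: (ex_minnP exQ) => s /asbP [W [sW [nW [pW szW]]]] minW.
  have minW' : forall W', subm W' S -> W' != [::] -> \prod_(x <- W') x \in N ->
      (s <= size W')%N.
    by move=> W' a b c; apply: minW; apply/asbP; exists W'.
  have aW := all_subm sW aS.
  set v := \prod_(x <- W) x in pW.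
  have v1 : v != 1 := fS W sW nW.
  have [S' pS] := subm_decomp sW.
  have szS : size S = (s + size S')%N by rewrite (perm_size pS) size_cat szW.
  have s_gt0 : (0 < s)%N by rewrite -szW lt0n size_eq0.
  have aS' := all_subm (subm_rest pS) aS.
  have fS' : freeS S' by move=> T h; apply: fS; apply: subm_trans h (subm_rest pS).
  have IHS' := IH S' (ltac:(by rewrite szS -{1}(add0n (size S')) ltn_add2r)) aS' fS'.
  pose Pt (i : nat) := \prod_(x <- take i W) x.
  have PtG i : Pt i \in G by apply: prod_in_G; apply: all_subm aW; apply: subm_take.
  pose R := [set v ^ Pt i | i : 'I_s].
  have RN : R \subset N.
    apply/subsetP => z /imsetP [i _ ->].
    by rewrite memJ_norm ?pW // (subsetP nNG).
  have R1 : 1 \notin R.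
    apply/imsetP => [[i _ e]]; move: v1.
    by rewrite -(conjg_eq1 v (Pt i)) -e eqxx.
  have neq : forall i j : nat, (i < j)%N -> (j < s)%N -> v ^ Pt i != v ^ Pt j.
    move=> i j lt_ij ljs; apply/negP => /eqP e.
    set Bk := take (j - i) (drop i W).
    have PjE : Pt j = Pt i * \prod_(x <- Bk) x by apply: take_block; apply: ltnW.
    have BkN : \prod_(x <- Bk) x \notin N.
      apply/negP => BN.
      have := minW' Bk (subm_trans (subm_block W i (j - i)) sW).
      rewrite -size_eq0 size_take_min size_drop szW.
      have -> : minn (j - i) (s - i) = (j - i)%N.
        by apply/minn_idPl; apply: leq_sub2r; apply: ltnW.
      rewrite subn_eq0 leqNgt lt_ij /= => /(_ isT BN).
      rewrite leqNgt; apply/negP/negPn.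
      exact: leq_ltn_trans (leq_subr _ _) ljs.
    set c := (\prod_(x <- Bk) x) ^ (Pt i)^-1.
    have cE : Pt j = c * Pt i by rewrite PjE /c /conjg invgK !mulgA mulgKV.
    have cG : c \in G by rewrite groupJ ?groupV // prod_in_G // (all_subm (subm_block W i (j - i)) aW).
    have cN : c \notin N by rewrite memJ_norm // (subsetP nNG) // groupV.
    have e2 : v ^ c = v by apply: (conjg_inj (Pt i)); rewrite -conjgM -cE.
    have : c * v = v * c.
      have : c * (v ^ c) = c * v by rewrite e2.
      by rewrite /conjg !mulgA mulgV mul1g => ->.
    by apply/eqP; apply: frob.
  have Rcard : #|R| = s.
    rewrite card_imset ?card_ord // => i j e; apply/val_inj/eqP.
    case: (ltngtP i j) => // lt.
      by move: (neq i j lt (ltn_ord j)); rewrite e eqxx.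
    by move: (neq j i lt (ltn_ord i)); rewrite e eqxx.
  have cardB : #|1 |: R| = s.+1 by rewrite cardsU1 R1 Rcard.
  have BN : 1 |: R \subset N by rewrite subUset sub1set group1 RN.
  have uq : forall a b, a \in Xs S' -> b \in 1 |: R -> a * b = 1 -> b = 1.
    move=> a b; rewrite inE => /andP [aN /asbP [T [sT pT]]].
    rewrite in_setU1 => /orP [/eqP //|/imsetP [i _ ->]] e; exfalso.
    have sTW : subm (T ++ rot i W) S.
      apply: subm_perml (subm_catl pS sT).
      by rewrite perm_cat2l perm_sym perm_rot.
    have nTW : T ++ rot i W != [::].
      by rewrite -size_eq0 size_cat size_rot szW addn_eq0 negb_and -(lt0n s) s_gt0 orbT.
    move: (fS _ sTW nTW); rewrite big_cat /= pT rot_prod -/v -/(Pt i) e.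
    by rewrite eqxx.
  have sub : Xs S' * (1 |: R) \subset Xs S.
    apply/subsetP => z /mulsgP [a b aX bB ->].
    move: (aX); rewrite inE => /andP [aN /asbP [T [sT pT]]].
    move: bB; rewrite in_setU1 => /orP [/eqP ->|bR].
      rewrite mulg1 inE aN /=; apply/asbP; exists T; split => //.
      exact: subm_trans sT (subm_rest pS).
    move: (bR) => /imsetP [i _ bE].
    have bN : b \in N := subsetP RN b bR.
    rewrite inE groupM //=; apply/asbP; exists (T ++ rot i W); split.
      apply: subm_perml (subm_catl pS sT).
      by rewrite perm_cat2l perm_sym perm_rot.
    by rewrite big_cat /= pT rot_prod -/v -/(Pt i) bE.
  have := scherk abN (Xs_sub S') BN (one_Xs S') (setU11 1 R) uq.
  have := subset_leq_card sub.
  rewrite cardB szS.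
  exact: arith1 IHS'.
have := base aS (fun W h1 h2 => introN idP (fun h3 => noW (ex_intro _ W (conj h1 (conj h2 h3))))).
have : (0 < #|Xs S|)%N by apply/card_gt0P; exists 1; apply: one_Xs.
exact: arith2.
Qed.

Lemma key n S : (size S <= n)%N -> all (fun g => g \in G) S -> freeS S ->
  (size S + 2 <= #|Xs S| + p)%N.
Proof.
elim: n S => [|n IH] S leS aS fS; apply: main_case => // S' lt.
  by move: (leq_trans lt leS).
by apply: IH; rewrite -ltnS (leq_trans lt leS).
Qed.
End Key.

From mathcomp Require Import all_solvable ring.

Section Final.
Local Open Scope group_scope.
Variable gT : finGroupType.

Lemma expgz_nat (y : gT) (m : nat) (r : int) : (0 < m)%N -> y ^+ m = 1 ->
  exists R : nat, expgz y r = y ^+ R /\ (m%:Z %| (R%:Z - r)%R)%Z.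
Proof.
move=> m0 ym; case: r => n /=.
  by exists n; split => //; rewrite GRing.subrr dvdz0.
have e : (n.+1 + n.+1 * m.-1 = n.+1 * m)%N.
  by rewrite -{1}(muln1 n.+1) -mulnDr add1n prednK.
exists (n.+1 * m.-1)%N; split.
  apply: mulg1_eq; rewrite -expgD e mulnC expgM ym expg1n //.
rewrite NegzE GRing.opprK -PoszD addnC e.
exact: dvdn_mull (dvdnn m).
Qed.

Lemma nt (y : gT) (m p : nat) (r : int) (b : nat) : (0 < m)%N -> #[y] = m ->
  gcdz (p%:Z * (r - 1))%R m%:Z = 1%Z -> (expgz y r) ^+ b = y ^+ b -> y ^+ b = 1.
Proof.
move=> m0 oy g1 e.
have ym : y ^+ m = 1 by rewrite -oy expg_order.
have [R [ER dR]] := expgz_nat r m0 ym.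
move: e; rewrite ER -expgM.
case: R ER dR => [|R'] ER dR.
  by rewrite mul0n expg0 => <-.
rewrite mulSn expgD => /eqP; rewrite -{2}(mulg1 (y ^+ b)) (inj_eq (mulgI _)).
rewrite -order_dvdn oy => d1.
have d1' : (m%:Z %| (R' * b)%:Z)%Z by rewrite dvdzE /=.
have d2 : (m%:Z %| ((p%:Z * (r - 1)) * b%:Z)%R)%Z.
  have eq : ((r - 1) * b%:Z = (R' * b)%:Z - ((R'.+1)%:Z - r) * b%:Z)%R.
    rewrite PoszM -addn1 PoszD; ring.
  rewrite -GRing.mulrA dvdz_mull // eq GRing.rpredB //.
  exact: dvdz_mulr dR.
have cop : coprimez m%:Z (p%:Z * (r - 1))%R by rewrite /coprimez gcdzC g1.
move: d2; rewrite (Gauss_dvdzr _ cop) dvdzE /= => d3.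
by apply/eqP; rewrite -order_dvdn oy.
Qed.

Lemma prod_coset (x : gT) (N : {group gT}) (s : seq gT) : x \in 'N(N) ->
  all (fun g => (g \in N) || (g == x)) s ->
  (x ^+ count (fun g => g \notin N) s)^-1 * \prod_(g <- s) g \in N.
Proof.
move=> xN; elim: s => [|g s IH] /=.
  by rewrite big_nil expg0 invg1 mulg1 group1.
move=> /andP [hg hs]; rewrite big_cons.
case: (boolP (g \in N)) => gN /=.
  rewrite add0n mulgA (conjgCV _ g) invgK -mulgA groupM //; last exact: IH.
  by rewrite memJ_norm // groupX.
move: hg; rewrite (negbTE gN) /= => /eqP ->.
by rewrite add1n expgS invMg -mulgA mulKg; apply: IH.
Qed.

Lemma prod_nseq (y : gT) k : \prod_(g <- nseq k y) g = y ^+ k.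
Proof. by elim: k => [|k IH]; rewrite ?big_nil ?expg0 //= big_cons IH expgS. Qed.

Lemma arith4 (m p : nat) : (1 <= m)%N -> (1 < p)%N -> (m.-1 + p.-1 = m + p - 2)%N.
Proof. by move=> hm hp; rewrite -!subn1; lia. Qed.
Lemma arith3 (a k m p : nat) : (a + 2 <= k + p)%N -> (k <= m)%N -> (a <= m + p - 2)%N.
Proof. lia. Qed.
End Final.

Theorem proposition3p5 (gT : finGroupType) (G : {group gT}) (x y : gT)
    (p m : nat) (r : int) :
  prime p -> (1 <= m)%N ->
  (r ^+ p == 1 %[mod m%:Z])%Z ->
  G :=: <<[set x; y]>>%g ->
  (x ^+ p = 1)%g -> (y ^+ m = 1)%g -> (x^-1 * y * x = expgz y r)%g ->
  #|G| = (p * m)%N ->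
  (forall q : nat, prime q -> q %| #|G| -> p <= q)%N ->
  gcdz (p%:Z * (r - 1))%R m%:Z = 1%Z ->
  is_small_davenport G (m + p - 2).
Proof.
Local Open Scope group_scope.
move=> pr_p m_gt0 rp GE xp ym xyx cardG minp g1.
have p_gt0 := prime_gt0 pr_p; have p_gt1 := prime_gt1 pr_p.
have xG : x \in G by rewrite GE mem_gen // !inE eqxx.
have yG : y \in G by rewrite GE mem_gen // !inE eqxx orbT.
pose N := <[y]>%G.
have sNG : N \subset G by rewrite cycle_subG.
have xN : x \in 'N(N).
  apply/normP; apply/eqP; rewrite eqEcard cardJg leqnn andbT -cycleJ cycle_subG.
  have -> : (y ^ x = expgz y r)%g by rewrite -xyx /conjg mulgA.
  by case: (r) => n /=; rewrite ?groupV groupX // cycle_id.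
have nNG : G \subset 'N(N).
  rewrite GE gen_subG; apply/subsetP => z; rewrite in_set2 => /orP [] /eqP -> //.
  by rewrite (subsetP (normG N)) // cycle_id.
have abN : abelian N := cycle_abelian y.
have xNx : <[x]> \subset 'N(N) by rewrite cycle_subG.
have GNX : G \subset (N * <[x]>)%g.
  rewrite -norm_joinEr // GE gen_subG; apply/subsetP => z0; rewrite in_set2.
  move=> /orP [] /eqP ->.
    by rewrite (subsetP (joing_subr _ _)) // cycle_id.
  by rewrite (subsetP (joing_subl _ _)) // cycle_id.
have oy : (#[y] %| m)%N by rewrite order_dvdn ym.
have ox : (#[x] %| p)%N by rewrite order_dvdn xp.
have cardle : (#|G| <= #[y] * #[x])%N.
  apply: (leq_trans (subset_leq_card GNX)).
  have e := mul_cardG N <[x]>%G.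
  apply: (@leq_trans (#|(N * <[x]>)%g| * #|N :&: <[x]>|)).
    by rewrite leq_pmulr ?cardG_gt0.
  by rewrite -e.
have oym : (#[y] = m)%N.
  have y_le : (#[y] <= m)%N := dvdn_leq m_gt0 oy.
  have x_le : (#[x] <= p)%N := dvdn_leq p_gt0 ox.
  have : (p * m <= #[y] * p)%N.
    by rewrite -cardG; apply: leq_trans cardle _; rewrite leq_mul2l x_le orbT.
  by rewrite mulnC leq_pmul2r // => h; apply/eqP; rewrite eqn_leq y_le h.
have cardN : #|N| = m by exact: oym.
have iGN : #|G : N| = p.
  have := Lagrange sNG; rewrite cardN cardG mulnC => /eqP.
  by rewrite eqn_pmul2r // => /eqP.
have xnN : x \notin N.
  apply/negP => xinN.
  have : G \subset N.
    rewrite GE gen_subG; apply/subsetP => z; rewrite in_set2 => /orP [] /eqP -> //.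
    exact: cycle_id.
  by move/subset_leq_card; rewrite cardN cardG leqNgt ltn_Pmull.
have frob : forall v c, v \in N -> v != 1 -> c \in G -> c \notin N ->
    (c * v != v * c)%g.
  move=> v c vN v1 cG cN; apply/negP => /eqP cv.
  pose C := 'C_G[v]%G.
  have sNC : N \subset C.
    apply/subsetP => z zN; rewrite inE (subsetP sNG) //=.
    apply/cent1P; exact: (centsP abN).
  have cC : c \in C by rewrite inE cG /=; apply/cent1P.
  have sCG : C \subset G := subsetIl _ _.
  have e := Lagrange_index sCG sNC; rewrite iGN in e.
  have CN1 : #|C : N| != 1%N.
    rewrite indexg_eq1; apply/negP => sCN.
    by move: cN; rewrite (subsetP sCN).
  have dv : (#|C : N| %| p)%N by rewrite -e dvdn_mull.
  have eGC : #|G : C| = 1%N.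
    case/primeP: pr_p => _ /(_ _ dv) /orP [/eqP h1|/eqP hp].
      by rewrite h1 in CN1.
    by move: e; rewrite hp -{2}(mul1n p) => /eqP; rewrite eqn_pmul2r // => /eqP.
  move/eqP: eGC; rewrite indexg_eq1 => sGC.
  have xC : x \in 'C[v] by apply: (subsetP (subset_trans sGC (subsetIr _ _))).
  move/cent1P: xC => xv.
  case/cycleP: vN => b vE.
  move: v1; rewrite vE => /eqP; apply; apply: (nt m_gt0 oym g1).
  rewrite -xyx.
  have -> : x^-1 * y * x = y ^ x by rewrite /conjg mulgA.
  by rewrite -conjXg -vE /conjg -xv mulKg.
split.
  have yN : y \in N := cycle_id y.
  have xy : (x == y) = false by apply/eqP => e; move: xnN; rewrite e yN.
  exists (nseq m.-1 y ++ nseq p.-1 x); split; last first.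
    by rewrite size_cat !size_nseq arith4.
  split; first by rewrite all_cat !all_nseq xG yG !orbT.
  move=> T sT Tn [s' [ps' pr1]].
  have memS : forall g, g \in s' -> (g == y) || (g == x).
    move=> g; rewrite (perm_mem ps') => /(mem_subseq sT); rewrite mem_cat !mem_nseq.
    by case/orP => /andP [_ ->]; rewrite ?orbT.
  have allS : all (fun g => (g \in N) || (g == x)) s'.
    by apply/allP => g /memS /orP [/eqP ->|->]; rewrite ?yN ?orbT.
  have hc := prod_coset xN allS; rewrite pr1 mulg1 groupV in hc.
  move: hc; set c := count _ s' => hc.
  have cT : c = count (fun g => g \notin N) T := seq.permP ps' _.
  have c_le : (c <= p.-1)%N.
    rewrite cT; apply: leq_trans (leq_count_subseq _ sT) _.
    by rewrite count_cat !count_nseq /= yN xnN mul0n mul1n add0n.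
  have c0 : c = 0%N.
    apply/eqP; apply/negP => /negP cn0.
    have x1 : x != 1 by apply: contraNneq xnN => ->; rewrite group1.
    have ox' : #[x] = p.
      case/primeP: pr_p => _ /(_ _ ox) /orP [/eqP h|/eqP //].
      by move: x1; rewrite -order_eq1 h.
    have cp : (0 < c)%N by rewrite lt0n.
    have cop : coprime #[x] c.
      rewrite ox' prime_coprime //; apply/negP => /(dvdn_leq cp) pc.
      by move: (leq_trans pc c_le); rewrite -ltnS prednK // ltnn.
    have eC : <[x ^+ c]> = <[x]>.
      apply/eqP; rewrite eqEcard cycleX /=.
      have -> : #|<[x ^+ c]>| = #[x ^+ c] by [].
      by rewrite orderXgcd (eqP cop) divn1 leqnn.
    have : <[x]> \subset N by rewrite -eC cycle_subG.
    by rewrite cycle_subG (negbTE xnN).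
  have allY : all (pred1 y) s'.
    apply/allP => g gs; case/orP: (memS g gs) => // /eqP gx; exfalso.
    have : (0 < c)%N by rewrite /c -has_count; apply/hasP; exists g => //; rewrite gx.
    by rewrite c0.
  have sE := all_pred1P _ _ allY.
  have szs : size s' = size T := perm_size ps'.
  have s_gt0 : (0 < size s')%N by rewrite szs lt0n size_eq0; apply/eqP.
  have s_le : (size s' <= m.-1)%N.
    have := allY; rewrite all_count => /eqP <-.
    rewrite (seq.permP ps'); apply: leq_trans (leq_count_subseq _ sT) _.
    by rewrite count_cat !count_nseq /= eqxx xy mul0n mul1n addn0.
  move: pr1; rewrite sE prod_nseq => /eqP; rewrite -order_dvdn oym => dm.
  have := dvdn_leq s_gt0 dm.
  by rewrite leqNgt (leq_ltn_trans s_le) // prednK.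
move=> S [aS fS].
have fS' : freeS S.
  move=> T sT Tn; apply/negP => /eqP pT1.
  have [s ss ps] := subm_subseq sT.
  apply: (fS s ss).
    by move=> s0; move: Tn; rewrite -size_eq0 (perm_size ps) s0.
  by exists T.
have := key nNG abN iGN frob (leqnn _) aS fS'.
have := subset_leq_card (Xs_sub N S); rewrite cardN.
move: (#|Xs N S|) => k h1 h2.
exact: arith3 h2 h1.
Qed.
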